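(* Let $G=S_3\simeq\mathrm{PSL}_2(\mathbb{F}_2)$ and $H=\{1\}$. There is a flabby resolution $0\to J_{G/H}\to P\to F\to 0$ with $\mathrm{rank}_{\mathbb{Z}}F=7$ such that there is an isomorphism of $S_3$-lattices $$\mathbb{Z}[S_3/C_2]^{\oplus 2}\oplus\mathbb{Z}[S_3/C_3]\simeq\mathbb{Z}\oplus F$$ (rank $8$). In particular $F$ is stably permutation.
   Context: A $G$-lattice is a finitely generated $\mathbb{Z}[G]$-module free over $\mathbb{Z}$. A permutation $G$-lattice is one isomorphic to $\bigoplus_i\mathbb{Z}[G/H_i]$; $\mathbb{Z}$ denotes the trivial lattice $\mathbb{Z}[G/G]$. A $G$-lattice $M$ is stably permutation if $M\oplus P\simeq P'$ for permutation $P,P'$. $F$ is flabby if $\widehat H^{-1}(H',F)=0$ for all subgroups $H'\le G$ (Tate cohomology). A flabby resolution of $M$ is an exact sequence $0\to M\to P\to F\to0$ with $P$ permutation and $F$ flabby; the similarity class of $F$ is the flabby class $[M]^{fl}$. For $H\le G$, $I_{G/H}$ is the kernel of the augmentation $\mathbb{Z}[G/H]\to\mathbb{Z}$ and the Chevalley module is $J_{G/H}=\mathrm{Hom}_{\mathbb{Z}}(I_{G/H},\mathbb{Z})$, fitting in $0\to\mathbb{Z}\to\mathbb{Z}[G/H]\to J_{G/H}\to0$; it is the character module of the norm one torus $R^{(1)}_{K/k}(\mathbb{G}_m)$ when $G=\mathrm{Gal}(L/k)$, $H=\mathrm{Gal}(L/K)$. *)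

(* Defs.v *)
From HB Require Import structures.
From mathcomp Require Import all_boot all_order all_fingroup all_solvable all_algebra.
From mathcomp Require Import mxrepresentation.
Set Implicit Arguments. Unset Strict Implicit. Unset Printing Implicit Defensive.
Import GRing.Theory.
Local Open Scope ring_scope.

(* A G-lattice of Z-rank n is encoded by a matrix representation
   r : gT -> 'M[int]_n (mx_repr G r) acting on the right on row vectors
   Z^n (x . g := x *m r g). *)

Section Lattices.
Variable gT : finGroupType.
Implicit Types G H : {group gT}.

Definition is_lattice G n (r : gT -> 'M[int]_n) := mx_repr G r.

Definition gmap G m n (r1 : gT -> 'M[int]_m) (r2 : gT -> 'M[int]_n)
  (f : 'M[int]_(m, n)) := forall g, g \in G -> r1 g *m f = f *m r2 g.

Definition lat_iso G m n (r1 : gT -> 'M[int]_m) (r2 : gT -> 'M[int]_n) :=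
  exists (f : 'M[int]_(m, n)) (f' : 'M[int]_(n, m)),
    [/\ gmap G r1 r2 f, gmap G r2 r1 f', f *m f' = 1%:M & f' *m f = 1%:M].

Definition dsum m n (r1 : gT -> 'M[int]_m) (r2 : gT -> 'M[int]_n)
  : gT -> 'M[int]_(m + n) := fun g => block_mx (r1 g) 0 0 (r2 g).

Definition trivlat : gT -> 'M[int]_1 := fun _ => 1%:M.

(* permutation lattice Z[G/H]: basis = right cosets Hx of H in G,
   G acting by right multiplication Hx . g = Hxg *)
Definition coset_of_idx G H (i : 'I_#|rcosets H G|) : {set gT} :=
  @enum_val _ (mem (rcosets H G)) i.

Definition permlat G H : gT -> 'M[int]_#|rcosets H G| := fun g =>
  \matrix_(i, j) ((@coset_of_idx G H j == (@coset_of_idx G H i :* g)%g)%:R : int).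

Fixpoint psrank G (Hs : seq {group gT}) : nat :=
  match Hs with [::] => 0%N | H :: Hs' => (#|rcosets H G| + psrank G Hs')%N end.

Fixpoint permsum G (Hs : seq {group gT}) : gT -> 'M[int]_(psrank G Hs) :=
  match Hs return gT -> 'M[int]_(psrank G Hs) with
  | [::] => fun _ => 1%:M
  | H :: Hs' => dsum (permlat G H) (permsum G Hs')
  end.

Definition is_permutation G n (r : gT -> 'M[int]_n) :=
  exists Hs : seq {group gT},
    all (fun H : {group gT} => H \subset G) Hs /\ lat_iso G r (permsum G Hs).

Definition is_stably_permutation G n (r : gT -> 'M[int]_n) :=
  exists Hs Hs' : seq {group gT},
    [/\ all (fun H : {group gT} => H \subset G) Hs,
        all (fun H : {group gT} => H \subset G) Hs' &
        lat_iso G (dsum r (permsum G Hs)) (permsum G Hs')].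

(* flabby: Tate cohomology H^-1(H', F) = ker(N_{H'}) / I_{H'} F vanishes
   for every subgroup H' of G *)
Definition is_flabby G n (r : gT -> 'M[int]_n) :=
  forall H : {group gT}, H \subset G ->
    forall x : 'rV[int]_n, x *m (\sum_(h in H) r h) = 0 ->
      exists y : gT -> 'rV[int]_n, x = \sum_(h in H) y h *m (r h - 1%:M).

Definition short_exact a b c (f : 'M[int]_(a, b)) (q : 'M[int]_(b, c)) :=
  [/\ (forall x : 'rV[int]_a, x *m f = 0 -> x = 0),
      (forall z : 'rV[int]_c, exists y : 'rV[int]_b, y *m q = z) &
      (forall y : 'rV[int]_b, y *m q = 0 <-> exists x : 'rV[int]_a, x *m f = y)].

Definition flabby_resolution G m (rM : gT -> 'M[int]_m) nf
  (rF : gT -> 'M[int]_nf) :=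
  exists (p : nat) (rP : gT -> 'M[int]_p) (i : 'M[int]_(m, p)) (q : 'M[int]_(p, nf)),
    [/\ is_permutation G rP, is_lattice G rF /\ is_flabby G rF,
        gmap G rM rP i, gmap G rP rF q & short_exact i q].

(* dual lattice Hom_Z(M, Z), with (phi . g)(x) = phi(x . g^-1) *)
Definition duallat m (r : gT -> 'M[int]_m) : gT -> 'M[int]_m :=
  fun g => (r g^-1)%g^T.

Definition augm G H : 'M[int]_(#|rcosets H G|, 1) := const_mx 1.

(* J is (isomorphic to) the Chevalley module J_{G/H} = Hom_Z(I_{G/H}, Z),
   where I_{G/H} = ker(augmentation Z[G/H] -> Z) *)
Definition is_chevalley G H n (rJ : gT -> 'M[int]_n) :=
  exists (k : nat) (rI : gT -> 'M[int]_k) (iota : 'M[int]_(k, #|rcosets H G|)),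
    [/\ is_lattice G rI, gmap G rI (permlat G H) iota,
        (forall x : 'rV[int]_k, x *m iota = 0 -> x = 0),
        (forall y : 'rV[int]_#|rcosets H G|, y *m augm G H = 0 <-> exists x : 'rV[int]_k, x *m iota = y) &
        lat_iso G rJ (duallat rI)].

End Lattices.

Definition Sym3 : {group 'S_3} := [set: 'S_3]%G.
Definition Cyc2 : {group 'S_3} := <[tperm (ord0 : 'I_3) (@Ordinal 3 1 isT)]>%G.
Definition Cyc3 : {group 'S_3} := ('Alt_('I_3))%G.

(* Main.v *)
Require Import Defs.
From HB Require Import structures.
From mathcomp Require Import all_boot all_order all_fingroup all_solvable all_algebra.
From mathcomp Require Import mxrepresentation.
Set Implicit Arguments. Unset Strict Implicit. Unset Printing Implicit Defensive.
Import GRing.Theory Num.Theory.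

Section ListMx.
Local Open Scope ring_scope.

Definition mkM m n (l : seq (seq int)) : 'M[int]_(m, n) :=
  \matrix_(i, j) nth 0 (nth [::] l i) j.

Definition sumlist (s : seq int) : int := foldr +%R 0 s.

Definition lmul n p (l1 l2 : seq (seq int)) : seq (seq int) :=
  map (fun r => mkseq (fun j => sumlist (mkseq (fun k => nth 0 r k * nth 0 (nth [::] l2 k) j) n)) p) l1.

Lemma sum_sumlist n (F : nat -> int) : \sum_(k < n) F k = sumlist (mkseq F n).
Proof.
rewrite -(big_mkord xpredT F) /index_iota subn0 /mkseq /sumlist.
elim: (iota 0 n) => [|a s IH]; first by rewrite big_nil.
by rewrite big_cons IH.
Qed.

Lemma mkM_mul m n p l1 l2 :
  mkM m n l1 *m mkM n p l2 = mkM m p (lmul n p l1 l2).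
Proof.
apply/matrixP => i j; rewrite !mxE.
have -> : \sum_(k < n) (mkM m n l1 i k * mkM n p l2 k j) =
   \sum_(k < n) (nth 0 (nth [::] l1 i) k * nth 0 (nth [::] l2 k) j).
  by apply: eq_bigr => k _; rewrite !mxE.
rewrite /lmul.
case: (ltnP i (size l1)) => Hi.
  by rewrite (nth_map [::]) // nth_mkseq //; apply: sum_sumlist.
rewrite !nth_default ?size_map //.
by rewrite big1 // => k _; rewrite nth_nil mul0r.
Qed.

Lemma mkM_ext m n l1 l2 : l1 = l2 -> mkM m n l1 = mkM m n l2.
Proof. by move->. Qed.

Lemma mkM_nil m n : mkM m n [::] = 0.
Proof. by apply/matrixP => i j; rewrite !mxE nth_nil nth_nil. Qed.

Definition lid n : seq (seq int) := mkseq (fun i => mkseq (fun j => (i == j)%:R) n) n.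

Lemma mkM_id n : mkM n n (lid n) = 1%:M.
Proof. by apply/matrixP => i j; rewrite !mxE /lid !nth_mkseq. Qed.

Definition lpad n (r : seq int) := mkseq (fun j => nth 0 r j) n.
Definition lblock m1 m2 n1 (a b c d : seq (seq int)) :=
  mkseq (fun i => lpad n1 (nth [::] a i) ++ nth [::] b i) m1 ++
  mkseq (fun i => lpad n1 (nth [::] c i) ++ nth [::] d i) m2.

Lemma nth_lpad_cat n1 (x y : seq int) (j : nat) :
  nth 0 (lpad n1 x ++ y) j = if (j < n1)%N then nth 0 x j else nth 0 y (j - n1).
Proof. by rewrite nth_cat size_mkseq; case: ifP => // Hj; rewrite nth_mkseq. Qed.

Lemma mkM_block m1 m2 n1 n2 a b c d :
  block_mx (mkM m1 n1 a) (mkM m1 n2 b) (mkM m2 n1 c) (mkM m2 n2 d) =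
  mkM (m1 + m2) (n1 + n2) (lblock m1 m2 n1 a b c d).
Proof.
apply/matrixP => i j; rewrite !mxE /lblock nth_cat size_mkseq.
case: splitP => i' Hi; rewrite !mxE; case: splitP => j' Hj; rewrite !mxE.
- by rewrite Hi nth_mkseq // nth_lpad_cat Hj ltn_ord.
- by rewrite Hi nth_mkseq // nth_lpad_cat Hj ltnNge leq_addr /= addKn.
- by rewrite Hi addKn nth_mkseq // nth_lpad_cat Hj ltn_ord.
- by rewrite Hi addKn nth_mkseq // nth_lpad_cat Hj ltnNge leq_addr /= addKn.
Qed.

Definition test1 := mkM 2 2 [:: [:: 1; -1]; [:: 0; 2]]%Z.
Lemma test : test1 *m test1 = mkM 2 2 [:: [:: 1; -3]; [:: 0; 4]]%Z.
Proof. rewrite /test1 mkM_mul; apply: mkM_ext; vm_compute; reflexivity. Qed.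
End ListMx.

Section Generic.
Local Open Scope ring_scope.
Variable gT : finGroupType.
Variable G : {group gT}.

Lemma lat_iso_refl n (r : gT -> 'M[int]_n) : lat_iso G r r.
Proof. by exists 1%:M, 1%:M; split; rewrite ?mulmx1 // => g _; rewrite mulmx1 mul1mx. Qed.

Lemma lat_iso_sym m n (r1 : gT -> 'M[int]_m) (r2 : gT -> 'M[int]_n) :
  lat_iso G r1 r2 -> lat_iso G r2 r1.
Proof. by case=> f [f' [h1 h2 h3 h4]]; exists f', f. Qed.

Lemma lat_iso_trans m n p (r1 : gT -> 'M[int]_m) (r2 : gT -> 'M[int]_n)
  (r3 : gT -> 'M[int]_p) :
  lat_iso G r1 r2 -> lat_iso G r2 r3 -> lat_iso G r1 r3.
Proof.
case=> f [f' [h1 h2 h3 h4]] [e [e' [k1 k2 k3 k4]]].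
exists (f *m e), (e' *m f'); split.
- by move=> g Hg; rewrite mulmxA h1 // -mulmxA k1 // mulmxA.
- by move=> g Hg; rewrite mulmxA k2 // -mulmxA h2 // mulmxA.
- by rewrite -mulmxA (mulmxA e) k3 mul1mx h3.
- by rewrite -mulmxA (mulmxA f') h4 mul1mx k4.
Qed.

Lemma lat_iso_ext m n (r1 r1' : gT -> 'M[int]_m) (r2 r2' : gT -> 'M[int]_n) :
  {in G, r1 =1 r1'} -> {in G, r2 =1 r2'} -> lat_iso G r1 r2 -> lat_iso G r1' r2'.
Proof.
move=> e1 e2 [f [f' [h1 h2 h3 h4]]]; exists f, f'; split => // g Hg.
  by rewrite -e1 // -e2 // h1.
by rewrite -e1 // -e2 // h2.
Qed.

Lemma lat_iso_dsum m1 m2 n1 n2 (r1 : gT -> 'M[int]_m1) (r1' : gT -> 'M[int]_n1)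
  (r2 : gT -> 'M[int]_m2) (r2' : gT -> 'M[int]_n2) :
  lat_iso G r1 r1' -> lat_iso G r2 r2' -> lat_iso G (dsum r1 r2) (dsum r1' r2').
Proof.
case=> f [f' [h1 h2 h3 h4]] [e [e' [k1 k2 k3 k4]]].
exists (block_mx f 0 0 e), (block_mx f' 0 0 e'); split.
- move=> g Hg; rewrite /dsum !mulmx_block !mulmx0 !mul0mx !addr0 !add0r.
  by rewrite h1 // k1.
- move=> g Hg; rewrite /dsum !mulmx_block !mulmx0 !mul0mx !addr0 !add0r.
  by rewrite h2 // k2.
- by rewrite !mulmx_block !mulmx0 !mul0mx !addr0 !add0r h3 k3 -scalar_mx_block.
- by rewrite !mulmx_block !mulmx0 !mul0mx !addr0 !add0r h4 k4 -scalar_mx_block.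
Qed.

Lemma lat_iso_comm m n (r1 : gT -> 'M[int]_m) (r2 : gT -> 'M[int]_n) :
  lat_iso G (dsum r1 r2) (dsum r2 r1).
Proof.
exists (block_mx 0 1%:M 1%:M 0), (block_mx 0 1%:M 1%:M 0); split.
- move=> g Hg; rewrite /dsum !mulmx_block !mulmx0 !mul0mx !addr0 !add0r.
  by rewrite !mulmx1 !mul1mx.
- move=> g Hg; rewrite /dsum !mulmx_block !mulmx0 !mul0mx !addr0 !add0r.
  by rewrite !mulmx1 !mul1mx.
- by rewrite !mulmx_block !mulmx0 !mul0mx !addr0 !add0r !mulmx1 -scalar_mx_block.
- by rewrite !mulmx_block !mulmx0 !mul0mx !addr0 !add0r !mulmx1 -scalar_mx_block.
Qed.

Definition unit0 : gT -> 'M[int]_0 := fun _ => 1%:M.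

Lemma lat_iso_unit0 m (r : gT -> 'M[int]_m) : lat_iso G (dsum r unit0) r.
Proof.
exists (col_mx 1%:M 0), (row_mx 1%:M 0); split.
- move=> g Hg; rewrite /dsum mul_block_col mul_col_mx !mulmx0 !mul0mx !addr0 mulmx1 mul1mx.
  by [].
- move=> g Hg; rewrite /dsum mul_row_block mul_mx_row !mulmx0 !mul0mx !addr0 mulmx1 mul1mx.
  by [].

- rewrite mul_col_row mulmx1 mulmx0 mul0mx [RHS]scalar_mx_block.
  by congr block_mx; apply/matrixP => -[].
- by rewrite mul_row_col mulmx1 mulmx0 addr0.
Qed.
Lemma lat_iso_dual m n (r1 : gT -> 'M[int]_m) (r2 : gT -> 'M[int]_n) :
  lat_iso G r1 r2 -> lat_iso G (duallat r1) (duallat r2).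
Proof.
case=> f [f' [h1 h2 h3 h4]]; exists f'^T, f^T; split.
- by move=> g Hg; rewrite /duallat -!trmx_mul h2 // groupV.
- by move=> g Hg; rewrite /duallat -!trmx_mul h1 // groupV.
- by rewrite -trmx_mul h3 trmx1.
- by rewrite -trmx_mul h4 trmx1.
Qed.

Lemma mul_row_dsum m1 m2 p (a : 'M[int]_(p, m1)) (b : 'M[int]_(p, m2)) (A : 'M[int]_m1) (B : 'M[int]_m2) :
  row_mx a b *m block_mx A 0 0 B = row_mx (a *m A) (b *m B).
Proof. by rewrite mul_row_block !mulmx0 addr0 add0r. Qed.

Lemma sum_row_mx (I : finType) (P : pred I) p m1 m2
  (F1 : I -> 'M[int]_(p, m1)) (F2 : I -> 'M[int]_(p, m2)) :
  \sum_(i | P i) row_mx (F1 i) (F2 i) = row_mx (\sum_(i | P i) F1 i) (\sum_(i | P i) F2 i).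
Proof.
apply: (big_rec3 (fun a b c => a = row_mx b c)) => [|i a b c _ ->].
  by rewrite row_mx0.
by rewrite add_row_mx.
Qed.

Lemma dsum_sub1 m1 m2 (A : 'M[int]_m1) (B : 'M[int]_m2) :
  block_mx A 0 0 B - 1%:M = block_mx (A - 1%:M) 0 0 (B - 1%:M).
Proof.
by rewrite [1%:M]scalar_mx_block opp_block_mx add_block_mx !oppr0 !addr0.
Qed.

Lemma flabby_iso m n (r1 : gT -> 'M[int]_m) (r2 : gT -> 'M[int]_n) :
  lat_iso G r1 r2 -> is_flabby G r2 -> is_flabby G r1.
Proof.
move=> [f [f' [h1 h2 h3 h4]]] F2 H sHG x Hx.
have : (x *m f) *m (\sum_(h in H) r2 h) = 0.
  rewrite -mulmxA mulmx_sumr (eq_bigr (fun h => r1 h *m f)); last first.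
    by move=> h Hh; rewrite h1 // (subsetP sHG).
  by rewrite -mulmx_suml mulmxA Hx mul0mx.
case/(F2 H sHG) => y Hy; exists (fun h => y h *m f').
have -> : x = x *m f *m f' by rewrite -mulmxA h3 mulmx1.
rewrite Hy mulmx_suml; apply: eq_bigr => h Hh.
rewrite -!mulmxA mulmxBl mulmxBr h2 ?(subsetP sHG) //.
by rewrite mul1mx mulmxBr mulmxBr mulmx1.
Qed.

Lemma flabby_dsum m1 m2 (r1 : gT -> 'M[int]_m1) (r2 : gT -> 'M[int]_m2) :
  is_flabby G r1 -> is_flabby G r2 -> is_flabby G (dsum r1 r2).
Proof.
move=> F1 F2 H sHG x Hx.
rewrite -(hsubmxK x) mulmx_sumr in Hx; move: Hx.
under eq_bigr do rewrite /dsum mul_row_dsum.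
rewrite sum_row_mx -row_mx0; case/eq_row_mx => Hx1 Hx2.
rewrite -mulmx_sumr in Hx1; rewrite -mulmx_sumr in Hx2.
case: (F1 H sHG _ Hx1) => y1 Hy1; case: (F2 H sHG _ Hx2) => y2 Hy2.
exists (fun h => row_mx (y1 h) (y2 h)).
under eq_bigr do rewrite /dsum dsum_sub1 mul_row_dsum.
by rewrite row_mx0 sum_row_mx -Hy1 -Hy2 hsubmxK.
Qed.

Lemma flabby_summand m1 m2 (r1 : gT -> 'M[int]_m1) (r2 : gT -> 'M[int]_m2) :
  is_flabby G (dsum r1 r2) -> is_flabby G r2.
Proof.
move=> F H sHG x Hx.
have : row_mx (0 : 'M[int]_(1, m1)) x *m (\sum_(h in H) dsum r1 r2 h) = 0.
  rewrite mulmx_sumr; under eq_bigr do rewrite /dsum mul_row_dsum mul0mx.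
  by rewrite sum_row_mx -mulmx_sumr Hx big1 ?row_mx0.
case/(F H sHG) => y Hy; exists (fun h => rsubmx (y h)).
move: Hy; under eq_bigr do rewrite /dsum dsum_sub1 -[y _]hsubmxK mul_row_dsum.
by rewrite sum_row_mx; case/eq_row_mx.
Qed.
End Generic.

Section Pmx.
Local Open Scope ring_scope.

Definition pmx m n (p : 'I_m -> 'I_n) : 'M[int]_(m, n) := \matrix_(i, j) (p i == j)%:R.

Lemma sum_delta n (a : 'I_n) (F : 'I_n -> int) : \sum_k (a == k)%:R * F k = F a.
Proof.
rewrite (bigD1 a) //= eqxx mul1r big1 ?addr0 // => k Hk.
by rewrite eq_sym (negbTE Hk) mul0r.
Qed.

Lemma pmx_mul m n p (f : 'I_m -> 'I_n) (g : 'I_n -> 'I_p) :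
  pmx f *m pmx g = pmx (fun i => g (f i)).
Proof.
apply/matrixP => i j; rewrite !mxE.
by under eq_bigr do rewrite !mxE; rewrite sum_delta.
Qed.

Lemma pmx_id n : pmx (@id 'I_n) = 1%:M.
Proof. by apply/matrixP => i j; rewrite !mxE. Qed.

Lemma pmx_tr m (f g : 'I_m -> 'I_m) : cancel f g -> cancel g f -> (pmx f)^T = pmx g.
Proof.
move=> fK gK; apply/matrixP => i j; rewrite !mxE.
have E : (f j == i) = (g i == j) by apply/eqP/eqP => [<-|<-]; rewrite ?fK ?gK.
by rewrite E.
Qed.

Lemma delta_pmx m n (a : 'I_m) (f : 'I_m -> 'I_n) : (delta_mx 0 a : 'rV[int]_m) *m pmx f = delta_mx 0 (f a).
Proof.
apply/matrixP => i j; rewrite !mxE.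
under eq_bigr do rewrite !mxE.
rewrite (bigD1 a) //= eqxx big1 ?addr0; last by move=> k Hk; rewrite (negbTE Hk) andbF mul0r.
by rewrite ord1 eqxx /= mul1r eq_sym.
Qed.

Lemma pmx_ones m n (f : 'I_m -> 'I_n) : pmx f *m (const_mx 1 : 'cV[int]_n) = const_mx 1.
Proof.
apply/matrixP => i j; rewrite !mxE.
under eq_bigr do rewrite !mxE mulr1; rewrite (bigD1 (f i)) //= eqxx big1 ?addr0 //.
by move=> k Hk; rewrite eq_sym (negbTE Hk).
Qed.

Variable gT : finGroupType.
Variable G : {group gT}.

Section Flabby.
Variable m : nat.
Variable p : gT -> 'I_m -> 'I_m.
Hypothesis p1 : forall i, p 1%g i = i.
Hypothesis pM : {in G &, forall g h i, p (g * h)%g i = p h (p g i)}.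

Variable H : {group gT}.
Hypothesis sHG : H \subset G.

Let inG h : h \in H -> h \in G. Proof. exact: (subsetP sHG). Qed.

Definition orb i := [set p h i | h in H].

Lemma orb_self i : i \in orb i.
Proof. by apply/imsetP; exists 1%g; rewrite ?group1 ?p1. Qed.

Lemma orb_eq i j : j \in orb i -> orb j = orb i.
Proof.
case/imsetP => h0 Hh0 ->; apply/setP => k; apply/imsetP/imsetP => -[h Hh ->].
  by exists (h0 * h)%g; rewrite ?groupM // pM ?inG.
exists (h0^-1 * h)%g; rewrite ?groupM ?groupV //.
by rewrite pM ?inG ?groupV // -(pM (inG Hh0)) ?inG ?groupV // mulgV p1.
Qed.

Definition rho i := odflt i [pick k in orb i].

Lemma rho_in i : rho i \in orb i.
Proof. by rewrite /rho; case: pickP => [k //|/(_ i)]; rewrite orb_self. Qed.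

Lemma rho_eq i j : j \in orb i -> rho j = rho i.
Proof. by move=> /orb_eq E; rewrite /rho E; case: pickP => // /(_ i); rewrite orb_self. Qed.

Lemma rho_idem i : rho (rho i) = rho i.
Proof. exact: rho_eq (rho_in i). Qed.

Lemma i_in_orb_rho i : i \in orb (rho i).
Proof. by rewrite (orb_eq (rho_in i)) orb_self. Qed.

Definition hh i := odflt 1%g [pick h in H | p h (rho i) == i].

Lemma hh_spec i : hh i \in H /\ p (hh i) (rho i) = i.
Proof.
rewrite /hh; case: pickP => [h /andP[Hh /eqP E]|no]; first by split.
case/imsetP: (i_in_orb_rho i) => h Hh E; have := no h; by rewrite Hh -E eqxx.
Qed.

Definition N := \sum_(h in H) pmx (p h).

Lemma pmx_N h0 : h0 \in H -> pmx (p h0) *m N = N.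
Proof.
move=> Hh0; rewrite /N mulmx_sumr.
rewrite (reindex_inj (mulgI h0^-1)%g) /=.
apply: eq_big => [h|h Hh]; first by rewrite groupMl ?groupV.
rewrite pmx_mul; apply/matrixP => i j; rewrite !mxE.
by rewrite -pM ?inG // mulgA mulgV mul1g.
Qed.
Lemma eN_entry (a k : 'I_m) : (('e_a : 'rV[int]_m) *m N) 0 k = \sum_(h in H) (p h a == k)%:R.
Proof.
rewrite /N mulmx_sumr summxE; apply: eq_bigr => h _.
by rewrite delta_pmx mxE eqxx eq_sym.
Qed.

Lemma eN_rho i : 'e_(rho i) *m N = 'e_i *m N :> 'rV[int]_m.
Proof.
case: (hh_spec i) => Hh E.
by rewrite -[in LHS](pmx_N Hh) mulmxA delta_pmx E.
Qed.

Lemma pmx_flabby_main (x : 'rV[int]_m) :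
  x *m N = 0 -> exists y : gT -> 'rV_m, x = \sum_(h in H) y h *m (pmx (p h) - 1%:M).
Proof.
move=> Hx.
pose z : 'rV[int]_m := \sum_i x 0 i *: 'e_(rho i).
have zN : z *m N = 0.
  rewrite /z mulmx_suml; under eq_bigr do rewrite -scalemxAl eN_rho scalemxAl.
  by rewrite -mulmx_suml -row_sum_delta.
have z0 : z = 0.
  apply/matrixP => i k; rewrite ord1 mxE.
  have zk : z 0 k = \sum_i0 x 0 i0 * (rho i0 == k)%:R.
    by rewrite /z summxE; apply: eq_bigr => i0 _; rewrite !mxE eqxx eq_sym.
  rewrite zk; case: (eqVneq (rho k) k) => Hk; last first.
    rewrite big1 // => i0 _; case: eqP => [E|]; last by rewrite mulr0.
    by move: Hk; rewrite -E rho_idem eqxx.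
  pose c : int := \sum_(h in H) (p h k == k)%:R.
  have Hc : c != 0.
    rewrite /c -natr_sum pnatr_eq0 -lt0n (bigD1 1%g) ?group1 //= p1 eqxx.
    by rewrite add1n.
  have : (z *m N) 0 k = (\sum_i0 x 0 i0 * (rho i0 == k)%:R) * c.
    rewrite /z mulmx_suml summxE mulr_suml; apply: eq_bigr => i0 _.
    rewrite -scalemxAl mxE eN_entry -mulrA; congr (_ * _).
    case: (eqVneq (rho i0) k) => E.
      by rewrite E mul1r.
    rewrite mul0r big1 // => h Hh; case: eqP => // E'.
    have : k \in orb (rho i0) by apply/imsetP; exists h.
    by move/rho_eq; rewrite rho_idem Hk => E''; rewrite E'' eqxx in E.
  rewrite zN mxE => /esym /eqP; rewrite mulf_eq0 (negbTE Hc) orbF => /eqP ->.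
  done.
pose y h : 'rV[int]_m := \sum_(i | hh i == h) x 0 i *: 'e_(rho i).
exists y.
have -> : \sum_(h in H) y h *m (pmx (p h) - 1%:M) =
          \sum_(h in H) \sum_(i | true && (hh i == h)) x 0 i *: ('e_(rho i) *m (pmx (p (hh i)) - 1%:M)).
  apply: eq_bigr => h Hh; rewrite /y mulmx_suml; apply: eq_bigr => i /eqP ->.
  by rewrite scalemxAl.
rewrite -(partition_big _ (fun h => h \in H)); last by move=> i _; case: (hh_spec i).
have -> : \sum_(i | true) x 0 i *: ('e_(rho i) *m (pmx (p (hh i)) - 1%:M)) =
          \sum_i x 0 i *: 'e_i - z.
  rewrite /z -sumrB; apply: eq_bigr => i _.
  by rewrite mulmxBr delta_pmx (proj2 (hh_spec i)) mulmx1 scalerBr.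
by rewrite z0 subr0 -row_sum_delta.
Qed.
End Flabby.
Lemma pmx_flabby m (p : gT -> 'I_m -> 'I_m) (r : gT -> 'M[int]_m) :
  (forall i, p 1%g i = i) ->
  {in G &, forall g h i, p (g * h)%g i = p h (p g i)} ->
  {in G, forall g, r g = pmx (p g)} -> is_flabby G r.
Proof.
move=> p1 pM rE H sHG x Hx.
have Er : forall h, h \in H -> r h = pmx (p h) by move=> h Hh; rewrite rE ?(subsetP sHG).
case: (@pmx_flabby_main m p p1 pM H sHG x).
  by rewrite -Hx /N; congr (_ *m _); apply: eq_bigr => h Hh; rewrite Er.
move=> y Hy; exists y; rewrite Hy; apply: eq_bigr => h Hh; by rewrite Er.
Qed.
Lemma eq_pmx m n (f g : 'I_m -> 'I_n) : f =1 g -> pmx f = pmx g.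
Proof. by move=> E; apply/matrixP => i j; rewrite !mxE E. Qed.

Definition lat_iso_p m n (r1 : gT -> 'M[int]_m) (r2 : gT -> 'M[int]_n) :=
  exists (b : 'I_m -> 'I_n) (c : 'I_n -> 'I_m),
    [/\ gmap G r1 r2 (pmx b), gmap G r2 r1 (pmx c), pmx b *m pmx c = 1%:M & pmx c *m pmx b = 1%:M].

Lemma lat_iso_pW m n (r1 : gT -> 'M[int]_m) (r2 : gT -> 'M[int]_n) :
  lat_iso_p r1 r2 -> lat_iso G r1 r2.
Proof. by case=> b [c [h1 h2 h3 h4]]; exists (pmx b), (pmx c). Qed.

Lemma pmx_iso m n (p1 : gT -> 'I_m -> 'I_m) (p2 : gT -> 'I_n -> 'I_n)
  (r1 : gT -> 'M[int]_m) (r2 : gT -> 'M[int]_n) (b : 'I_m -> 'I_n) (c : 'I_n -> 'I_m) :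
  cancel b c -> cancel c b -> {in G, forall g i, b (p1 g i) = p2 g (b i)} ->
  {in G, forall g, r1 g = pmx (p1 g)} -> {in G, forall g, r2 g = pmx (p2 g)} ->
  lat_iso_p r1 r2.
Proof.
move=> bK cK Eb E1 E2; exists b, c; split.
- move=> g Hg; rewrite E1 // E2 // !pmx_mul; apply: eq_pmx => i; exact: Eb.
- move=> g Hg; rewrite E1 // E2 // !pmx_mul; apply: eq_pmx => j.
  by apply: (can_inj bK); rewrite Eb // !cK.
- by rewrite pmx_mul (eq_pmx (g := id)) ?pmx_id.
- by rewrite pmx_mul (eq_pmx (g := id)) ?pmx_id.
Qed.

Lemma pmx_repr m (p : gT -> 'I_m -> 'I_m) (r : gT -> 'M[int]_m) :
  (forall i, p 1%g i = i) ->
  {in G &, forall g h i, p (g * h)%g i = p h (p g i)} ->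
  {in G, forall g, r g = pmx (p g)} -> mx_repr G r.
Proof.
move=> p1 pM E; split; first by rewrite E ?group1 // (eq_pmx (g := id)) ?pmx_id.
move=> g h Hg Hh; rewrite !E ?groupM // pmx_mul; apply: eq_pmx => i; exact: pM.
Qed.

Lemma pmx_orth m (p : gT -> 'I_m -> 'I_m) (r : gT -> 'M[int]_m) :
  (forall i, p 1%g i = i) ->
  {in G &, forall g h i, p (g * h)%g i = p h (p g i)} ->
  {in G, forall g, r g = pmx (p g)} -> {in G, forall g, (r g^-1%g)^T = r g}.
Proof.
move=> p1 pM E g Hg; rewrite !E ?groupV //; apply: pmx_tr => i.
  by rewrite -pM ?groupV // mulVg p1.
by rewrite -pM ?groupV // mulgV p1.
Qed.

Definition pcos (H : {group gT}) (g : gT) (i : 'I_#|rcosets H G|) : 'I_#|rcosets H G| :=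
  enum_rank_in (enum_valP i) (coset_of_idx i :* g)%g.

Lemma rank_irr (H : {group gT}) (X : {set gT}) (i j : 'I_#|rcosets H G|) :
  X \in rcosets H G ->
  enum_rank_in (enum_valP i) X = enum_rank_in (enum_valP j) X.
Proof. by move=> HX; apply: enum_val_inj; rewrite !enum_rankK_in. Qed.

Lemma coset_in (H : {group gT}) (i : 'I_#|rcosets H G|) : coset_of_idx i \in rcosets H G.
Proof. exact: enum_valP. Qed.

Lemma cosetM_in (H : {group gT}) (X : {set gT}) g :
  X \in rcosets H G -> g \in G -> (X :* g)%g \in rcosets H G.
Proof.
case/rcosetsP => x Hx ->; move=> Hg; apply/rcosetsP; exists (x * g)%g.
  by rewrite groupM.
by rewrite rcosetM.
Qed.

Lemma coset_pcos (H : {group gT}) g i : g \in G ->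
  coset_of_idx (@pcos H g i) = (coset_of_idx i :* g)%g.
Proof. by move=> Hg; rewrite /coset_of_idx /pcos enum_rankK_in // cosetM_in ?coset_in. Qed.

Lemma permlat_pmx (H : {group gT}) g : g \in G -> permlat G H g = pmx (@pcos H g).
Proof.
move=> Hg; apply/matrixP => i j; rewrite !mxE.
have E : (coset_of_idx j == (coset_of_idx i :* g)%g) = (@pcos H g i == j).
  apply/eqP/eqP => [E|<-]; last by rewrite coset_pcos.
  by apply: enum_val_inj; rewrite -/(coset_of_idx _) coset_pcos.
by rewrite E.
Qed.

Lemma pcos1 (H : {group gT}) i : @pcos H 1%g i = i.
Proof. by apply: enum_val_inj; rewrite -/(coset_of_idx _) coset_pcos ?group1 // rcoset1. Qed.

Lemma pcosM (H : {group gT}) : {in G &, forall g h i, @pcos H (g * h)%g i = @pcos H h (@pcos H g i)}.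
Proof.
move=> g h Hg Hh i; apply: enum_val_inj; rewrite -!/(coset_of_idx _).
by rewrite !coset_pcos ?groupM // rcosetM.
Qed.
Lemma rcoset_eq (H : {group gT}) x y : (x * y^-1)%g \in H -> (H :* x)%g = (H :* y)%g.
Proof.
move=> Hxy; apply/setP => z; rewrite !mem_rcoset.
have -> : (z * y^-1 = z * x^-1 * (x * y^-1))%g by rewrite !mulgA mulgKV.
by rewrite (groupMr _ Hxy).
Qed.

Lemma cosets_iso (H : {group gT}) k (pk : gT -> 'I_k -> 'I_k) (r2 : gT -> 'M[int]_k)
  (fH : gT -> 'I_k) (sH : 'I_k -> gT) :
  H \subset G ->
  (forall j, sH j \in G) -> (forall j, fH (sH j) = j) ->
  {in H & G, forall h x, fH (h * x)%g = fH x} ->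
  {in G &, forall x y, fH x = fH y -> (x * y^-1)%g \in H} ->
  {in G &, forall x g, fH (x * g)%g = pk g (fH x)} ->
  {in G, forall g, r2 g = pmx (pk g)} ->
  lat_iso_p (permlat G H) r2.
Proof.
move=> sHG sHin fsH fHl fHinj fHM E2.
have Hc : forall j, (H :* sH j)%g \in rcosets H G.
  by move=> j; apply/rcosetsP; exists (sH j).
pose c j := enum_rank_in (Hc j) (H :* sH j)%g.
pose b (i : 'I_#|rcosets H G|) := fH (repr (coset_of_idx i)).
have b_def : forall i x, x \in G -> coset_of_idx i = (H :* x)%g -> b i = fH x.
  move=> i x Hx Ei; rewrite /b Ei.
  case/rcosetP: (mem_repr_rcoset H x) => a Ha ->.
  by rewrite fHl // (subsetP sHG).
have cE : forall j, coset_of_idx (c j) = (H :* sH j)%g.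
  by move=> j; rewrite /coset_of_idx /c enum_rankK_in.
apply: (@pmx_iso _ _ (@pcos H) pk _ _ b c).
- move=> i; case/rcosetsP: (coset_in i) => x Hx Ei.
  rewrite (b_def i x) //; apply: enum_val_inj.
  transitivity (coset_of_idx (c (fH x))); first by [].
  rewrite cE -[RHS]/(coset_of_idx i) Ei.
  by apply: rcoset_eq; apply: fHinj; rewrite ?fsH.
- by move=> j; rewrite (b_def (c j) (sH j)) ?cE.
- move=> g Hg i; case/rcosetsP: (coset_in i) => x Hx Ei.
  rewrite (b_def i x) // (b_def _ (x * g)%g) ?groupM ?fHM //.
  by rewrite coset_pcos // Ei rcosetM.
- by move=> g Hg; rewrite permlat_pmx.
- exact: E2.
Qed.
End Pmx.

Section S3.
Local Open Scope ring_scope.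

Definition o0 : 'I_3 := ord0.
Definition o1 : 'I_3 := @Ordinal 3 1 isT.
Definition o2 : 'I_3 := @Ordinal 3 2 isT.
Definition t1 : 'S_3 := tperm o0 o1.
Definition t2 : 'S_3 := tperm o0 o2.

Lemma ord3 (k : 'I_3) : k = o0 \/ k = o1 \/ k = o2.
Proof.
case: k => [[|[|[|//]]] Hk]; [left|right;left|right;right]; exact: val_inj.
Qed.

Lemma S3_gen (P : 'S_3 -> Prop) :
  P 1%g -> (forall g h, P g -> P h -> P (g * h)%g) -> P t1 -> P t2 -> forall g, P g.
Proof.
move=> P1 PM Pt1 Pt2 g.
have : g \in <<[set tperm o0 y | y in 'I_3]>>%g by rewrite gen_tperm inE.
case/gen_prodgP => n [c Hc ->].
apply: (big_ind P) => // i _.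
case/imsetP: (Hc i) => y _ ->.
by case: (ord3 y) => [->|[->|->]]; rewrite ?tperm1.
Qed.

Lemma inSym3 (g : 'S_3) : g \in Sym3.
Proof. by rewrite inE. Qed.

Lemma odd_t1 : odd_perm t1 = true. Proof. by rewrite odd_tperm. Qed.
Lemma odd_t2 : odd_perm t2 = true. Proof. by rewrite odd_tperm. Qed.

Lemma stab2 (z : 'S_3) : z o2 = o2 -> z = 1%g \/ z = t1.
Proof.
move=> z2.
have z0 : z o0 != o2 by rewrite -z2 (inj_eq perm_inj).
have z1 : z o1 != o2 by rewrite -z2 (inj_eq perm_inj).
have z01 : z o0 != z o1 by rewrite (inj_eq perm_inj).
case: (ord3 (z o0)) => [E0|[E0|E0]]; last by rewrite E0 eqxx in z0.
- left; apply/permP => k; rewrite perm1.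
  case: (ord3 (z o1)) => [E1|[E1|E1]].
  + by rewrite E0 E1 eqxx in z01.
  + by case: (ord3 k) => [->|[->|->]]; rewrite ?E0 ?E1 ?z2.
  + by rewrite E1 eqxx in z1.
- right; apply/permP => k.
  case: (ord3 (z o1)) => [E1|[E1|E1]].
  + by case: (ord3 k) => [->|[->|->]]; rewrite ?E0 ?E1 ?z2 /t1 ?tpermL ?tpermR ?tpermD.
  + by rewrite E0 E1 eqxx in z01.
  + by rewrite E1 eqxx in z1.
Qed.

Lemma Cyc2_fix (h : 'S_3) : h \in Cyc2 -> h o2 = o2.
Proof.
case/cycleP => k ->; elim: k => [|k IH]; first by rewrite perm1.
by rewrite expgS permM tpermD // IH.
Qed.

Lemma t1_Cyc2 : t1 \in Cyc2. Proof. exact: cycle_id. Qed.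
End S3.

Section Reps.
Local Open Scope ring_scope.

Definition pm (g : 'S_3) : 'M[int]_3 := pmx (fun i : 'I_3 => g i).
Definition flip2 (b : 'I_2) : 'I_2 := if b == ord0 then ord_max else ord0.
Definition b2o (b : bool) : 'I_2 := if b then ord_max else ord0.
Definition sgp (g : 'S_3) (b : 'I_2) : 'I_2 := if odd_perm g then flip2 b else b.
Definition sg (g : 'S_3) : 'M[int]_2 := pmx (sgp g).

Definition pt (i : 'I_6) : 'I_3 := Ordinal (ltn_pmod i (isT : 0 < 3)%N).
Definition bt (i : 'I_6) : bool := (3 <= i)%N.
Lemma enc_proof (a : 'I_3) (b : bool) : (a + 3 * b < 6)%N.
Proof. by case: a => [[|[|[|//]]] Ha]; case: b. Qed.
Definition encode (a : 'I_3) (b : bool) : 'I_6 := Ordinal (enc_proof a b).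
Definition preg (g : 'S_3) (i : 'I_6) : 'I_6 := encode (g (pt i)) (bt i (+) odd_perm g).
Definition reg (g : 'S_3) : 'M[int]_6 := pmx (preg g).

Lemma pt_enc a b : pt (encode a b) = a.
Proof. by apply: val_inj; case: a => [[|[|[|//]]] Ha]; case: b. Qed.
Lemma bt_enc a b : bt (encode a b) = b.
Proof. by case: a => [[|[|[|//]]] Ha]; case: b. Qed.
Lemma enc_dec i : encode (pt i) (bt i) = i.
Proof. by apply: val_inj; case: i => [[|[|[|[|[|[|//]]]]]] Hi]. Qed.
Lemma flip2K : involutive flip2.
Proof. by move=> b; apply: val_inj; case: b => [[|[|//]] Hb]. Qed.

Lemma pm_1 i : (1%g : 'S_3) i = i. Proof. exact: perm1. Qed.
Lemma pm_M : {in Sym3 &, forall (g h : 'S_3) i, (g * h)%g i = h (g i)}.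
Proof. by move=> g h _ _ i; rewrite permM. Qed.
Lemma sgp_1 i : sgp 1%g i = i. Proof. by rewrite /sgp odd_perm1. Qed.
Lemma sgp_M : {in Sym3 &, forall g h i, sgp (g * h)%g i = sgp h (sgp g i)}.
Proof.
move=> g h _ _ i; rewrite /sgp odd_permM.
by case: (odd_perm g); case: (odd_perm h); rewrite /= ?flip2K.
Qed.
Lemma preg_1 i : preg 1%g i = i. Proof. by rewrite /preg perm1 odd_perm1 addbF enc_dec. Qed.
Lemma preg_M : {in Sym3 &, forall g h i, preg (g * h)%g i = preg h (preg g i)}.
Proof.
move=> g h _ _ i; rewrite /preg pt_enc bt_enc permM odd_permM.
by rewrite addbA.
Qed.

Definition Xc (g : 'S_3) : 'M[int]_(3 + 3 + 2) := dsum (dsum pm pm) sg g.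
Definition rP (g : 'S_3) : 'M[int]_(6 + 6) := dsum reg reg g.

Lemma dsum_repr (gT : finGroupType) (G : {group gT}) m n (r1 : gT -> 'M[int]_m) (r2 : gT -> 'M[int]_n) :
  mx_repr G r1 -> mx_repr G r2 -> mx_repr G (dsum r1 r2).
Proof.
move=> [h1 h2] [k1 k2]; split; first by rewrite /dsum h1 k1 -scalar_mx_block.
move=> g h Hg Hh; rewrite /dsum mulmx_block !mulmx0 !mul0mx !addr0 !add0r.
by rewrite h2 // k2.
Qed.

Lemma dsum_orth (gT : finGroupType) (G : {group gT}) m n (r1 : gT -> 'M[int]_m) (r2 : gT -> 'M[int]_n) :
  {in G, forall g, (r1 g^-1%g)^T = r1 g} -> {in G, forall g, (r2 g^-1%g)^T = r2 g} ->
  {in G, forall g, (dsum r1 r2 g^-1%g)^T = dsum r1 r2 g}.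
Proof. by move=> h1 h2 g Hg; rewrite /dsum tr_block_mx !trmx0 h1 // h2. Qed.

Lemma pm_repr : mx_repr Sym3 pm. Proof. exact: (pmx_repr pm_1 pm_M). Qed.
Lemma sg_repr : mx_repr Sym3 sg. Proof. exact: (pmx_repr sgp_1 sgp_M). Qed.
Lemma reg_repr : mx_repr Sym3 reg. Proof. exact: (pmx_repr preg_1 preg_M). Qed.
Lemma Xc_repr : mx_repr Sym3 Xc.
Proof. exact: dsum_repr (dsum_repr pm_repr pm_repr) sg_repr. Qed.
Lemma rP_repr : mx_repr Sym3 rP.
Proof. exact: dsum_repr reg_repr reg_repr. Qed.

Lemma Xc_orth : {in Sym3, forall g, (Xc g^-1%g)^T = Xc g}.
Proof.
apply: dsum_orth; first apply: dsum_orth.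
- exact: (pmx_orth pm_1 pm_M).
- exact: (pmx_orth pm_1 pm_M).
- exact: (pmx_orth sgp_1 sgp_M).
Qed.
Lemma rP_orth : {in Sym3, forall g, (rP g^-1%g)^T = rP g}.
Proof. apply: dsum_orth; exact: (pmx_orth preg_1 preg_M). Qed.

Lemma Xc_flabby : is_flabby Sym3 Xc.
Proof.
apply: flabby_dsum; first apply: flabby_dsum.
- exact: (pmx_flabby pm_1 pm_M).
- exact: (pmx_flabby pm_1 pm_M).
- exact: (pmx_flabby sgp_1 sgp_M).
Qed.

Lemma iso_C2 : lat_iso Sym3 (permlat Sym3 Cyc2) pm.
Proof.
apply: lat_iso_pW.
refine (@cosets_iso _ Sym3 Cyc2 3 (fun (g : 'S_3) (i : 'I_3) => g i) pm (fun x : 'S_3 => x o2) (fun j => tperm o2 j) _ _ _ _ _ _ _).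
- exact: subsetT.
- by move=> j; rewrite inSym3.
- by move=> j; rewrite tpermL.
- by move=> h x Hh _; rewrite permM Cyc2_fix.
- move=> x y _ _ E.
  have : (x * y^-1)%g o2 = o2 by rewrite permM E permK.
  by case/stab2 => ->; rewrite ?group1 ?t1_Cyc2.
- by move=> x g _ _; rewrite permM.
- by [].
Qed.

Lemma b2o_inj : injective b2o. Proof. by case; case. Qed.

Lemma iso_C3 : lat_iso Sym3 (permlat Sym3 Cyc3) sg.
Proof.
apply: lat_iso_pW.
apply: (@cosets_iso _ _ _ _ sgp _ (fun x : 'S_3 => b2o (odd_perm x)) (fun j => if j == ord0 then 1%g else t1)).
- exact: subsetT.
- by move=> j; rewrite inSym3.
- move=> j; case: j => [[|[|//]] Hj].
    by rewrite /= odd_perm1; apply: val_inj.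
  by rewrite /= odd_t1; apply: val_inj.
- by move=> h x Hh _; move: Hh; rewrite Alt_even odd_permM => /negbTE ->.
- move=> x y _ _ /b2o_inj E; rewrite Alt_even odd_permM odd_permV E.
  by rewrite addbb.
- move=> x g _ _; rewrite odd_permM /sgp.
  by case: (odd_perm x); case: (odd_perm g).
- by [].
Qed.
Definition sreg (j : 'I_6) : 'S_3 :=
  let x := tperm o2 (pt j) in if odd_perm x == bt j then x else (t1 * x)%g.

Lemma iso_1 : lat_iso_p Sym3 (permlat Sym3 1%G) reg.
Proof.
refine (@cosets_iso _ Sym3 1%G 6 preg reg (fun x : 'S_3 => encode (x o2) (odd_perm x)) sreg _ _ _ _ _ _ _).
- exact: subsetT.
- by move=> j; rewrite inSym3.
- move=> j; rewrite /sreg; case: eqP => E.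
    by rewrite tpermL E enc_dec.
  have t1o2 : t1 o2 = o2 by rewrite tpermD.
  rewrite permM t1o2 tpermL odd_permM odd_t1.
  have -> : true (+) odd_perm (tperm o2 (pt j)) = bt j.
    by move: E; case: (bt j); case: odd_perm.
  by rewrite enc_dec.
- by move=> h x /set1gP -> _; rewrite mul1g.
- move=> x y _ _ E.
  have E1 : x o2 = y o2 by rewrite -(pt_enc (x o2) (odd_perm x)) E pt_enc.
  have E2 : odd_perm x = odd_perm y by rewrite -(bt_enc (x o2) (odd_perm x)) E bt_enc.
  have : (x * y^-1)%g o2 = o2 by rewrite permM E1 permK.
  case/stab2 => [->|Et]; first exact: group1.
  have : odd_perm (x * y^-1)%g = false by rewrite odd_permM odd_permV E2 addbb.
  by rewrite Et odd_t1.
- by move=> x g _ _; rewrite /preg pt_enc bt_enc permM odd_permM.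
- by [].
Qed.

Lemma iso_G : lat_iso Sym3 (permlat Sym3 Sym3) (@trivlat _).
Proof.
apply: lat_iso_pW.
refine (@cosets_iso _ Sym3 Sym3 1 (fun _ => id) (@trivlat _) (fun _ => ord0) (fun _ => 1%g) _ _ _ _ _ _ _).
- exact: subxx.
- by move=> j; rewrite inSym3.
- by move=> j; rewrite (ord1 j).
- by [].
- by move=> x y _ _ _; rewrite inSym3.
- by [].
- by move=> g _; rewrite /trivlat pmx_id.
Qed.
End Reps.

Section Concrete.
Local Open Scope ring_scope.

Definition lperm n (l : seq nat) : seq (seq int) := map (fun k => mkseq (fun j => (k == j)%:R) n) l.

Lemma pmx_mkM m n (f : 'I_m -> 'I_n) (l : seq nat) :
  size l = m -> (forall i : 'I_m, val (f i) = nth 0%N l i) -> pmx f = mkM m n (lperm n l).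
Proof.
move=> Hs Hf; apply/matrixP => i j; rewrite !mxE /lperm (nth_map 0%N) ?Hs //.
by rewrite nth_mkseq // -Hf.
Qed.

Lemma ones_mkM n : const_mx 1 = mkM n 1 (nseq n [:: 1]).
Proof. by apply/matrixP => i j; rewrite !mxE nth_nseq ltn_ord ord1. Qed.

Definition ladd (l1 l2 : seq (seq int)) (m n : nat) : seq (seq int) :=
  mkseq (fun i => mkseq (fun j => nth 0 (nth [::] l1 i) j + nth 0 (nth [::] l2 i) j) n) m.

Lemma mkM_add m n l1 l2 : mkM m n l1 + mkM m n l2 = mkM m n (ladd l1 l2 m n).
Proof. by apply/matrixP => i j; rewrite !mxE /ladd !nth_mkseq. Qed.

Lemma pm_t1 : pm t1 = mkM 3 3 (lperm 3 [:: 1; 0; 2]%N).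
Proof. by apply: pmx_mkM => // -[[|[|[|//]]] Hi]; rewrite /= permE. Qed.
Lemma pm_t2 : pm t2 = mkM 3 3 (lperm 3 [:: 2; 1; 0]%N).
Proof. by apply: pmx_mkM => // -[[|[|[|//]]] Hi]; rewrite /= permE. Qed.
Lemma sg_t1 : sg t1 = mkM 2 2 (lperm 2 [:: 1; 0]%N).
Proof. by apply: pmx_mkM => // -[[|[|//]] Hi]; rewrite /sgp odd_t1. Qed.
Lemma sg_t2 : sg t2 = mkM 2 2 (lperm 2 [:: 1; 0]%N).
Proof. by apply: pmx_mkM => // -[[|[|//]] Hi]; rewrite /sgp odd_t2. Qed.
Lemma reg_t1 : reg t1 = mkM 6 6 (lperm 6 [:: 4; 3; 5; 1; 0; 2]%N).
Proof. by apply: pmx_mkM => // -[[|[|[|[|[|[|//]]]]]] Hi]; rewrite /preg odd_t1 /= permE. Qed.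
Lemma reg_t2 : reg t2 = mkM 6 6 (lperm 6 [:: 5; 4; 3; 2; 1; 0]%N).
Proof. by apply: pmx_mkM => // -[[|[|[|[|[|[|//]]]]]] Hi]; rewrite /preg odd_t2 /= permE. Qed.

Definition Kbm : 'M[int]_(7, 12) := mkM 7 12 [:: [:: 1; 1; 1; 0; 0; 0; 0; 0; 0; 0; 0; 0]; [:: 0; 0; 0; 1; 1; 1; 0; 0; 0; 0; 0; 0]; [:: 0; -1; 0; -1; 0; 0; -1; 1; 0; 0; 0; 0]; [:: 1; 0; 0; -1; -1; 0; -1; 0; 1; 0; 0; 0]; [:: 0; 0; 0; 0; 0; 0; 1; 0; 0; 1; 0; 0]; [:: 0; 1; 0; 1; 0; 0; 1; 0; 0; 0; 1; 0]; [:: -1; 0; 0; 1; 1; 0; 1; 0; 0; 0; 0; 1]]%Z.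
Definition Kcm : 'M[int]_(12, 7) := mkM 12 7 [:: [:: 0; 0; 0; 0; 0; 0; 0]; [:: 0; 0; 0; 0; 0; 0; 0]; [:: 1; 0; 0; 0; 0; 0; 0]; [:: 0; 0; 0; 0; 0; 0; 0]; [:: 0; 0; 0; 0; 0; 0; 0]; [:: 0; 1; 0; 0; 0; 0; 0]; [:: 0; 0; 0; 0; 0; 0; 0]; [:: 0; 0; 1; 0; 0; 0; 0]; [:: 0; 0; 0; 1; 0; 0; 0]; [:: 0; 0; 0; 0; 1; 0; 0]; [:: 0; 0; 0; 0; 0; 1; 0]; [:: 0; 0; 0; 0; 0; 0; 1]]%Z.
Definition s0m : 'M[int]_(12, 6) := mkM 12 6 [:: [:: -1; 0; 1; 0; 0; 0]; [:: 1; -1; 0; 0; 0; 0]; [:: 0; 1; -1; 0; 0; 0]; [:: 0; 0; 0; -1; 1; 0]; [:: 0; 0; 0; 0; -1; 1]; [:: 0; 0; 0; 1; 0; -1]; [:: -1; 0; 0; 1; 0; 0]; [:: 0; -1; 0; 0; 1; 0]; [:: 0; 0; -1; 0; 0; 1]; [:: 1; 0; 0; -1; 0; 0]; [:: 0; 1; 0; 0; -1; 0]; [:: 0; 0; 1; 0; 0; -1]]%Z.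
Definition t0m : 'M[int]_(6, 12) := mkM 6 12 [:: [:: -1; 0; 0; 0; 0; 0; 0; 0; 0; 0; 0; 0]; [:: -1; -1; 0; 0; 0; 0; 0; 0; 0; 0; 0; 0]; [:: 0; 0; 0; 0; 0; 0; 0; 0; 0; 0; 0; 0]; [:: -1; 0; 0; 0; 0; 0; 1; 0; 0; 0; 0; 0]; [:: -1; 0; 0; 1; 0; 0; 1; 0; 0; 0; 0; 0]; [:: -1; 0; 0; 1; 1; 0; 1; 0; 0; 0; 0; 0]]%Z.
Definition wm : 'M[int]_(1, 6) := mkM 1 6 [:: [:: 0; 0; 1; 0; 0; 0]]%Z.
Definition Mm : 'M[int]_(8, 8) := mkM 8 8 [:: [:: 1; 1; 1; -1; -1; -1; -1; -1]; [:: -2; -2; -2; -1; -1; -1; -1; -2]; [:: -2; -2; -2; -1; -1; -1; -2; -1]; [:: 1; 2; 1; 2; -1; 1; 1; 1]; [:: 0; 1; 1; 2; 0; -1; 1; 0]; [:: 1; 0; 0; -2; 1; 1; 0; 0]; [:: -1; -1; -1; -1; -1; 0; -1; -1]; [:: 0; -1; 0; -1; 1; -1; -1; 0]]%Z.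
Definition Mim : 'M[int]_(8, 8) := mkM 8 8 [:: [:: 0; 2; -1; 2; -1; 0; -1; 2]; [:: 0; -1; 2; 0; 2; 2; 0; -1]; [:: 0; -1; -1; -1; 0; -1; 2; 0]; [:: -1; 1; 0; 3; 2; 2; 2; 3]; [:: -1; 0; 1; 2; 3; 3; 2; 2]; [:: -1; 0; 0; 2; 2; 2; 3; 2]; [:: 1; 0; -1; -3; -3; -3; -3; -3]; [:: 1; -1; 0; -3; -3; -3; -3; -3]]%Z.

Definition lnorm m n (l : seq (seq int)) := mkseq (fun i => mkseq (fun j => nth 0 (nth [::] l i) j) n) m.
Lemma mkM_normE m n l1 l2 : lnorm m n l1 = lnorm m n l2 -> mkM m n l1 = mkM m n l2.
Proof.
move=> E; apply/matrixP => i j.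
have := congr1 (fun l => nth 0 (nth [::] l i) j) E.
by rewrite /lnorm !nth_mkseq // !mxE.
Qed.

End Concrete.

Ltac conc := rewrite /Kbm /Kcm /s0m /t0m /wm /Mm /Mim /rP /Xc /dsum /trivlat
  ?reg_t1 ?reg_t2 ?pm_t1 ?pm_t2 ?sg_t1 ?sg_t2 ?ones_mkM -?mkM_id -?mkM_nil
  ; repeat (progress rewrite ?mkM_block ?mkM_mul ?mkM_add); apply: mkM_normE; vm_compute; reflexivity.

Section Concrete2.
Local Open Scope ring_scope.
Lemma C1 : Kbm *m Kcm = 1%:M. Proof. conc. Qed.
Lemma C2 : s0m *m t0m + Kcm *m Kbm = 1%:M. Proof. conc. Qed.
Lemma C3 : t0m *m s0m + const_mx 1 *m wm = 1%:M. Proof. conc. Qed.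
Lemma C4 : Kbm *m s0m = 0. Proof. conc. Qed.
Lemma C5 : s0m *m const_mx 1 = 0 :> 'cV[int]_12. Proof. conc. Qed.
Lemma C6a : Kbm *m rP t1 *m Kcm *m Kbm = Kbm *m rP t1. Proof. conc. Qed.
Lemma C6b : Kbm *m rP t2 *m Kcm *m Kbm = Kbm *m rP t2. Proof. conc. Qed.
Lemma C7a : rP t1 *m s0m = s0m *m reg t1. Proof. conc. Qed.
Lemma C7b : rP t2 *m s0m = s0m *m reg t2. Proof. conc. Qed.
Definition rKm (g : 'S_3) : 'M[int]_7 := Kbm *m rP g *m Kcm.
Lemma C8a : dsum (@trivlat _) rKm t1 *m Mm = Mm *m Xc t1. Proof. rewrite /rKm; conc. Qed.
Lemma C8b : dsum (@trivlat _) rKm t2 *m Mm = Mm *m Xc t2. Proof. rewrite /rKm; conc. Qed.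


Lemma C9 : Mm *m Mim = 1%:M. Proof. conc. Qed.
Lemma C10 : Mim *m Mm = 1%:M. Proof. conc. Qed.
End Concrete2.

Section Final.
Local Open Scope ring_scope.

Lemma gmap_gen m n (r1 : 'S_3 -> 'M[int]_m) (r2 : 'S_3 -> 'M[int]_n) f :
  mx_repr Sym3 r1 -> mx_repr Sym3 r2 ->
  r1 t1 *m f = f *m r2 t1 -> r1 t2 *m f = f *m r2 t2 -> gmap Sym3 r1 r2 f.
Proof.
move=> [h1 h2] [k1 k2] E1 E2 g _; move: g.
apply: S3_gen => //; first by rewrite h1 k1 mul1mx mulmx1.
move=> g h Pg Ph; rewrite h2 ?inSym3 // k2 ?inSym3 //.
by rewrite -mulmxA Ph !mulmxA Pg.
Qed.

Lemma gmap_inv (gT : finGroupType) (G : {group gT}) m n (r1 : gT -> 'M[int]_m) (r2 : gT -> 'M[int]_n) f f' :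
  gmap G r1 r2 f -> f *m f' = 1%:M -> f' *m f = 1%:M -> gmap G r2 r1 f'.
Proof.
move=> Hf ff' f'f g Hg.
have -> : r2 g *m f' = f' *m (f *m r2 g) *m f' by rewrite mulmxA f'f mul1mx.
by rewrite -Hf // !mulmxA -(mulmxA _ f f') ff' mulmx1.
Qed.

Lemma dual_repr (gT : finGroupType) (G : {group gT}) m (r : gT -> 'M[int]_m) :
  mx_repr G r -> mx_repr G (duallat r).
Proof.
move=> [h1 h2]; split; first by rewrite /duallat invg1 h1 trmx1.
by move=> g h Hg Hh; rewrite /duallat invMg h2 ?groupV // trmx_mul.
Qed.

Lemma stabK g : Kbm *m rP g *m Kcm *m Kbm = Kbm *m rP g.
Proof.
move: g; apply: S3_gen.
- by case: rP_repr => -> _; rewrite mulmx1 C1 mul1mx.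
- move=> g h Pg Ph; case: rP_repr => _ ->; rewrite ?inSym3 //.
  rewrite !mulmxA -Pg -!mulmxA; move: Ph; rewrite -!mulmxA => ->; done.
- exact: C6a.
- exact: C6b.
Qed.

Lemma rK_repr : mx_repr Sym3 rKm.
Proof.
split; first by rewrite /rKm; case: rP_repr => -> _; rewrite mulmx1 C1.
move=> g h _ _; rewrite /rKm; case: rP_repr => _ ->; rewrite ?inSym3 //.
by rewrite !mulmxA stabK.
Qed.

Definition rF : 'S_3 -> 'M[int]_7 := duallat rKm.

Lemma rF_repr : mx_repr Sym3 rF. Proof. exact: dual_repr rK_repr. Qed.

Lemma isoM : lat_iso Sym3 (dsum (@trivlat _) rKm) Xc.
Proof.
have H1 : gmap Sym3 (dsum (@trivlat _) rKm) Xc Mm.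
  apply: gmap_gen; rewrite ?C8a ?C8b //; last exact: Xc_repr.
  apply: dsum_repr; last exact: rK_repr.
  by split => //= g h _ _; rewrite /trivlat mulmx1.
by exists Mm, Mim; split; rewrite ?C9 ?C10 //; apply: gmap_inv H1 C9 C10.
Qed.

Lemma isoF : lat_iso Sym3 (dsum (@trivlat _) rF) Xc.
Proof.
apply: lat_iso_ext (lat_iso_dual isoM).
  by move=> g _; rewrite /duallat /dsum tr_block_mx !trmx0 /trivlat trmx1.
by move=> g Hg; rewrite /duallat Xc_orth.
Qed.

Lemma rF_flabby : is_flabby Sym3 rF.
Proof. exact: flabby_summand (flabby_iso isoF Xc_flabby). Qed.
End Final.

Section Main.
Local Open Scope ring_scope.

Lemma split_exact a b c (i : 'M[int]_(a, b)) (q : 'M[int]_(b, c)) (r : 'M[int]_(b, a))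
  (sct : 'M[int]_(c, b)) :
  i *m r = 1%:M -> sct *m q = 1%:M -> r *m i + q *m sct = 1%:M -> i *m q = 0 ->
  short_exact i q.
Proof.
move=> ir sq riqs iq; split.
- move=> x Hx; have -> : x = x *m i *m r by rewrite -mulmxA ir mulmx1.
  by rewrite Hx mul0mx.
- by move=> z; exists (z *m sct); rewrite -mulmxA sq mulmx1.
- move=> y; split => [Hy|[x <-]]; last by rewrite -mulmxA iq mulmx0.
  exists (y *m r).
  have E : y = y *m r *m i.
    by rewrite -{1}[y]mulmx1 -riqs mulmxDr !mulmxA Hy mul0mx addr0.
  by rewrite -E.
Qed.

Lemma s0_gmap : gmap Sym3 rP reg s0m.
Proof. apply: gmap_gen; [exact: rP_repr|exact: reg_repr|exact: C7a|exact: C7b]. Qed.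

Lemma subSym3 (H : {group 'S_3}) : H \subset Sym3.
Proof. by apply/subsetP => x _; rewrite inSym3. Qed.

Lemma assocX : lat_iso Sym3 Xc (dsum pm (dsum pm sg)).
Proof.
have H1 : gmap Sym3 Xc (dsum pm (dsum pm sg)) (1%:M : 'M[int]_8).
  apply: gmap_gen.
  - exact: Xc_repr.
  - exact: dsum_repr pm_repr (dsum_repr pm_repr sg_repr).
  - rewrite mulmx1 mul1mx; conc.
  - rewrite mulmx1 mul1mx; conc.
exists 1%:M, 1%:M; split; rewrite ?mulmx1 //.
exact: gmap_inv H1 (mulmx1 _) (mulmx1 _).
Qed.
Lemma main_aux (n : nat) (rJ : 'S_3 -> 'M[int]_n) :
  is_chevalley Sym3 1%G rJ ->
  exists rF : 'S_3 -> 'M[int]_7,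
    [/\ flabby_resolution Sym3 rJ rF,
        lat_iso Sym3 (dsum (dsum (permlat Sym3 Cyc2) (permlat Sym3 Cyc2)) (permlat Sym3 Cyc3))
                   (dsum (@trivlat _) rF)
      & is_stably_permutation Sym3 rF].
Proof.
case=> k [rI [iota [HrI Hiota Hinj Hker Hiso]]].
exists rF; split; last first.
- exists [:: Sym3], [:: Cyc2; Cyc2; Cyc3]; split; rewrite /= ?subSym3 //.
  have X1 := lat_iso_dsum iso_G (lat_iso_refl Sym3 (@unit0 'S_3)).
  have X2 := lat_iso_dsum (lat_iso_refl Sym3 rF) X1.
  apply: (lat_iso_trans X2).
  apply: (lat_iso_trans (lat_iso_dsum (lat_iso_refl _ rF) (lat_iso_unit0 _ _))).
  apply: (lat_iso_trans (lat_iso_comm _ _ _)).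
  apply: (lat_iso_trans isoF); apply: (lat_iso_trans assocX).
  apply: lat_iso_sym.
  apply: (lat_iso_dsum iso_C2); apply: (lat_iso_dsum iso_C2).
  exact: (lat_iso_trans (lat_iso_unit0 _ _) iso_C3).
- exact: (lat_iso_trans (lat_iso_dsum (lat_iso_dsum iso_C2 iso_C2) iso_C3) (lat_iso_sym isoF)).
case: iso_1 => bA [cA [hA hA' AA' A'A]].
pose iota' := iota *m pmx bA.
have Hi'g : gmap Sym3 rI reg iota'.
  by move=> g Hg; rewrite /iota' mulmxA Hiota // -mulmxA hA // mulmxA.
have Hcan : forall p (X : 'M[int]_(p, k)), X *m iota' = 0 -> X = 0.
  move=> p X E.
  have E2 : X *m iota = 0.
    by rewrite -[X *m iota]mulmx1 -AA' mulmxA -(mulmxA X) E mul0mx.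
  apply/row_matrixP => i; rewrite row0; apply: Hinj.
  by rewrite -row_mul E2 row0.
have Hio1 : iota' *m (const_mx 1 : 'cV[int]_6) = 0.
  rewrite /iota' -mulmxA pmx_ones.
  apply/row_matrixP => i; rewrite row_mul row0.
  have := (Hker (row i iota)).2; rewrite /augm; apply.
  by exists (delta_mx 0 i); rewrite -rowE.
have Hlift : forall y : 'rV[int]_6, y *m (const_mx 1 : 'cV[int]_6) = 0 -> exists x, x *m iota' = y.
  move=> y Hy.
  have : (y *m pmx cA) *m augm Sym3 1%G = 0 by rewrite /augm -mulmxA pmx_ones.
  case/(Hker _).1 => x Hx; exists x.
  by rewrite /iota' mulmxA Hx -mulmxA A'A mulmx1.
clearbody iota'.
have [s Hs] : exists s : 'M[int]_(12, k), s *m iota' = s0m.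
  have : forall i : 'I_12, exists x : 'rV[int]_k, x *m iota' = row i s0m.
    move=> i; apply: Hlift; by rewrite -row_mul C5 row0.
  case/fin_all_exists => x Hx; exists (\matrix_(i, j) x i 0 j).
  apply/row_matrixP => i; rewrite row_mul -Hx; congr (_ *m _).
  by apply/rowP => j; rewrite !mxE.
have Hsg : gmap Sym3 rP rI s.
  move=> g Hg; apply/eqP; rewrite -subr_eq0; apply/eqP; apply: Hcan.
  rewrite mulmxBl -!mulmxA Hs Hi'g // mulmxA Hs.
  by rewrite s0_gmap // subrr.
pose t := iota' *m t0m.
have ts : t *m s = 1%:M.
  apply/eqP; rewrite -subr_eq0; apply/eqP; apply: Hcan.
  rewrite mulmxBl mul1mx /t -!mulmxA Hs.
  have -> : t0m *m s0m = 1%:M - const_mx 1 *m wm by rewrite -C3 addrK.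
  by rewrite mulmxBr mulmx1 mulmxA Hio1 mul0mx subr0 subrr.
have Kbs : Kbm *m s = 0 by apply: Hcan; rewrite -mulmxA Hs C4.
case: Hiso => f [f' [hf hf' ff' f'f]].
exists 12%N, rP, (f *m s^T), Kbm^T; split.
- exists [:: 1%G; 1%G]; split; first by rewrite /= !subSym3.
  have I1 := lat_iso_pW iso_1.
  apply: (lat_iso_trans (lat_iso_dsum (lat_iso_sym I1) (lat_iso_sym I1))).
  exact: lat_iso_dsum (lat_iso_refl _ _) (lat_iso_sym (lat_iso_unit0 _ _)).
- split; [exact: rF_repr | exact: rF_flabby].
- move=> g Hg; rewrite mulmxA hf // /duallat -mulmxA -trmx_mul -Hsg ?groupV //.
  by rewrite trmx_mul rP_orth // mulmxA.
- by move=> g Hg; rewrite /rF /duallat -trmx_mul /rKm stabK trmx_mul rP_orth.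
- apply: (@split_exact _ _ _ _ _ (t^T *m f') Kcm^T).
  + by rewrite mulmxA -(mulmxA f) -trmx_mul ts trmx1 mulmx1 ff'.
  + by rewrite -trmx_mul C1 trmx1.
  + rewrite mulmxA -(mulmxA _ f') f'f mulmx1 -!trmx_mul -linearD /=.
    by rewrite /t mulmxA Hs C2 trmx1.
  + by rewrite -mulmxA -trmx_mul Kbs trmx0 mulmx0.
Qed.
End Main.

Theorem theorem1p3 (n : nat) (rJ : 'S_3 -> 'M[int]_n) :
  is_chevalley Sym3 1%G rJ ->
  exists rF : 'S_3 -> 'M[int]_7,
    [/\ flabby_resolution Sym3 rJ rF,
        lat_iso Sym3 (dsum (dsum (permlat Sym3 Cyc2) (permlat Sym3 Cyc2)) (permlat Sym3 Cyc3))
                   (dsum (@trivlat _) rF)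
      & is_stably_permutation Sym3 rF].
Proof. exact: main_aux. Qed.
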